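(* Let $n$ and $a$ be coprime positive integers. For every integer $k$ define $\pi_k\in S(\mathbb{Z}_n)$ by $\pi_k(x)=ax+k$. Then $\mathrm{cyc}(\pi_k)\leq\mathrm{cyc}(\pi_0)$ for every integer $k$.
   Context: $S(\mathbb{Z}_n)$ is the set of bijections $\mathbb{Z}_n\to\mathbb{Z}_n$; $\mathrm{cyc}(\pi)$ is the number of cycles (including fixed points) in the cycle decomposition of $\pi$. *)

(* Defs.v *)
From mathcomp Require Import all_boot all_order all_fingroup all_algebra.
Set Implicit Arguments. Unset Strict Implicit. Unset Printing Implicit Defensive.
Import Order.TTheory GRing.Theory Num.Theory.
Local Open Scope ring_scope.

(* Z_n is modelled by 'I_n (residues 0..n-1), which is correct for every n >= 1
   (unlike 'Z_n, which is Z/2 for n = 1). *)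

Definition cyc (T : finType) (s : {perm T}) : nat := #|porbits s|.

Lemma affine_lt (n : nat) (x : 'I_n) (m : int) : (`|(m %% n)%Z|%N < n)%N.
Proof.
have n0 : (0 < n)%N by apply: leq_ltn_trans (ltn_ord x).
have nz : (n%:Z != 0) by rewrite eqz_nat -lt0n.
have h1 := modz_ge0 m nz.
have h2 : (m %% n)%Z < n%:Z by apply: ltz_pmod; rewrite ltz_nat.
by rewrite -ltz_nat gez0_abs.
Qed.

(* x |-> a x + k  (mod n) on Z_n = 'I_n *)
Definition affine_fun (n a : nat) (k : int) (x : 'I_n) : 'I_n :=
  Ordinal (affine_lt x ((a * x)%N%:Z + k)%R).

Lemma affine_inj (n a : nat) (k : int) : coprime a n -> injective (@affine_fun n a k).
Proof.
move=> co x y /(congr1 val) /= E.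
have n0 : (0 < n)%N by apply: leq_ltn_trans (ltn_ord x).
have nz : (n%:Z != 0) by rewrite eqz_nat -lt0n.
have E' : (((a * x)%N%:Z + k)%R %% n)%Z = (((a * y)%N%:Z + k)%R %% n)%Z.
  by rewrite -[LHS]gez0_abs ?modz_ge0 // -[RHS]gez0_abs ?modz_ge0 // E.
have : ((a * x)%N%:Z == (a * y)%N%:Z %[mod n])%Z.
  by rewrite -(eqz_modDr k); apply/eqP.
rewrite eqz_mod_dvd !PoszM -mulrBr Gauss_dvdzr; last first.
  by rewrite coprimez_sym coprimezE /= .
rewrite -eqz_mod_dvd modz_small ?modz_small ?lez_nat ?ltz_nat ?ltn_ord //.
by move/eqP => [] /val_inj.
Qed.

Definition affine_perm (n a : nat) (k : int) (co : coprime a n) : {perm 'I_n} :=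
  perm (@affine_inj n a k co).

(* Main.v *)
Require Import Defs.
From mathcomp Require Import all_boot all_order all_fingroup all_algebra.
From mathcomp Require Import cyclic ring.
Import Order.TTheory GRing.Theory Num.Theory.

Section Burn.
Local Open Scope group_scope.
Lemma sum_cyc (T : finType) (s : {perm T}) (F : {perm T} -> nat) :
  (\sum_(g in <[s]>) F g = \sum_(j < #[s]) F (s ^+ j))%N.
Proof.
have -> : <[s]> = [set s ^+ (val j) | j : 'I_#[s]].
  apply/setP => g; apply/idP/imsetP.
    move=> /cyclePmin [i lti ->]. by exists (Ordinal lti).
  by move=> [j _ ->]; rewrite mem_cycle.
rewrite big_imset //= => i j _ _ /eqP.
rewrite eq_expg_mod_order !modn_small // => /eqP; apply: val_inj.
Qed.

Lemma sum_per (T : finType) (s : {perm T}) (F : {perm T} -> nat) c :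
  (\sum_(j < c * #[s]) F (s ^+ j) = c * \sum_(j < #[s]) F (s ^+ j))%N.
Proof.
rewrite -!(big_mkord xpredT (fun j => F (s ^+ j))).
elim: c => [|c IH]; first by rewrite mul0n big_geq.
rewrite [in RHS]mulSn -IH [(c.+1 * _)%N]mulSnr.
rewrite (big_cat_nat _ (n:=c * #[s])) //=; last by rewrite leq_addr.
rewrite addnC; congr (_ + _)%N.
rewrite -{1}[(c * #[s])%N]add0n big_addn addKn.

apply: eq_bigr => i _; by rewrite expgD mulnC expgM expg_order expg1n mulg1.
Qed.

Lemma burn (T : finType) (s : {perm T}) :
  (#|porbits s| * #[s] = \sum_(g in <[s]>) #|'Fix_([set: T] | 'P)[g]|)%N.
Proof.
have -> : porbits s = orbit 'P <[s]> @: [set: T].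
  rewrite /porbits porbit.unlock; apply/setP => y; apply/imsetP/imsetP => -[x _ ->]; exists x => //.
rewrite Frobenius_Cauchy //.
apply/actsP => g _ x; by rewrite !inE.
Qed.

Definition fixc {T : finType} (g : {perm T}) := #|[set x | g x == x]|.

Lemma cyc_sum (T : finType) (s : {perm T}) m : (#[s] %| m)%N ->
  (cyc s * m = \sum_(j < m) fixc (s ^+ j))%N.
Proof.
move=> dm; rewrite -(divnK dm) sum_per mulnA [(cyc s * _)%N]mulnC -mulnA.
congr (_ * _)%N; rewrite /cyc burn sum_cyc; apply: eq_bigr => j _.
apply: eq_card => x; rewrite !inE sub1set inE /=; done.
Qed.
End Burn.

Section Arith.
Local Open Scope ring_scope.
Fixpoint cc (a : nat) (k : int) (j : nat) : int :=
  if j is j'.+1 then a%:Z * cc a k j' + k else 0.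

Lemma affine_val n a k (co : coprime a n) (x : 'I_n) :
  ((affine_perm k co x : nat)%:Z = ((a%:Z * x%:Z + k) %% n)%Z).
Proof.
have n0 : (0 < n)%N by apply: leq_ltn_trans (ltn_ord x).
have nz : (n%:Z != 0) by rewrite eqz_nat -lt0n.
rewrite permE /= gez0_abs ?modz_ge0 //; by rewrite PoszM.
Qed.

Lemma iter_val n a k (co : coprime a n) j (x : 'I_n) :
  ((((affine_perm k co) ^+ j)%g x : nat)%:Z = (((a ^ j)%N%:Z * x%:Z + cc a k j) %% n)%Z).
Proof.
have n0 : (0 < n)%N by apply: leq_ltn_trans (ltn_ord x).
elim: j => [|j IH].
  by rewrite expg0 perm1 /= mul1r addr0 modz_small // lez_nat ltz_nat ltn_ord.
rewrite expgSr permM affine_val IH -modzDml modzMmr modzDml /=.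
congr ((_ %% _)%Z); rewrite expnS PoszM; ring.
Qed.

Lemma cc0 a j : cc a 0 j = 0.
Proof. by elim: j => //= j ->; rewrite mulr0 addr0. Qed.

Lemma count_le n (u c : int) :
  (#|[set x : 'I_n | (x%:Z == u * x%:Z + c %[mod n])%Z]| <=
   #|[set x : 'I_n | (x%:Z == u * x%:Z %[mod n])%Z]|)%N.
Proof.
set A := [set x : 'I_n | _].
case: (set_0Vmem A) => [-> | [x0 x0A]]; first by rewrite cards0.
have nz : (n%:Z != 0) by rewrite eqz_nat -lt0n; apply: leq_ltn_trans (ltn_ord x0).
pose g (x : 'I_n) : 'I_n := Ordinal (affine_lt x (x%:Z - x0%:Z)).
have gv x : (g x : nat)%:Z = ((x%:Z - x0%:Z) %% n)%Z.
  by rewrite /= gez0_abs ?modz_ge0.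
have ginj : injective g.
  move=> x y /(congr1 (fun z : 'I_n => (z : nat)%:Z)); rewrite !gv => /eqP.
  rewrite eqz_modDr => /eqP; rewrite !modz_small ?lez_nat ?ltz_nat ?ltn_ord //.
  by move=> [] /val_inj.
rewrite -(card_imset A ginj); apply: subset_leq_card; apply/subsetP => _ /imsetP [x xA ->].
move: xA x0A; rewrite !inE !eqz_mod_dvd => h1 h0.
rewrite gv.
have -> : ((x%:Z - x0%:Z) %% n)%Z - u * ((x%:Z - x0%:Z) %% n)%Z =
   (x%:Z - (u * x%:Z + c)) - (x0%:Z - (u * x0%:Z + c)) + (1 - u) * ( ((x%:Z - x0%:Z) %% n)%Z - (x%:Z - x0%:Z)) by ring.
apply: rpredD; first exact: rpredB h1 h0.
apply: dvdz_mull; by rewrite -eqz_mod_dvd modz_mod.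
Qed.

Lemma fix_eq n a k (co : coprime a n) j :
  fixc ((affine_perm k co) ^+ j)%g =
  #|[set x : 'I_n | (x%:Z == (a ^ j)%N%:Z * x%:Z + cc a k j %[mod n])%Z]|.
Proof.
apply: eq_card => x; rewrite !inE -val_eqE /= -eqz_nat iter_val.
have nz : (n%:Z != 0) by rewrite eqz_nat -lt0n; apply: leq_ltn_trans (ltn_ord x).
by rewrite [in RHS]modz_small ?lez_nat ?ltz_nat ?ltn_ord // eq_sym.
Qed.
End Arith.

Theorem lemma3p2 (n a : nat) (hn : (0 < n)%N) (ha : (0 < a)%N)
  (co : coprime a n) (k : int) :
  (cyc (affine_perm k co) <= cyc (affine_perm 0 co))%N.
Proof.
set m := #|[set: {perm 'I_n}]|.
have m0 : (0 < m)%N by rewrite /m cardG_gt0.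
have dv (s : {perm 'I_n}) : (#[s]%g %| m)%N by exact: (cardSg (subsetT <[s]>%g)).
rewrite -(leq_pmul2r m0) !cyc_sum //.
apply: leq_sum => j _; rewrite !fix_eq.
rewrite cc0.
apply: leq_trans (count_le _ _ (cc a k j)) _; apply: eq_leq.
by apply: eq_card => x; rewrite !inE addr0.
Qed.
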